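(* Let $(X,e\colon X\to M\otimes X)$ be a coalgebra for $F$ on $\mathbf{Met_3}^{C}$ and let $f\colon X\to S$ be given by $f(x)=\lim_{n\to\infty}\theta_n(x)$, where for $x\in X$: $\chi_0=x$, $\chi_n=(M^{n-1}\otimes e)(\chi_{n-1})$, $m_0,m_1,\ldots\in M$ are chosen with $\chi_n=m_0\otimes\cdots\otimes m_{n-1}\otimes x_n$ for all $n$, and $\theta_n(x)=m_0\otimes\cdots\otimes m_{n-1}\otimes z\in G$ for a fixed $z\in\{T,L,R\}$ (this limit exists and does not depend on the choices). Then $s\circ f=(M\otimes f)\circ e$.
   Context: A tripointed metric space is a set with three distinct points $T,L,R$ and a metric bounded by $1$ in which $T,L,R$ have pairwise distance $1$. $\mathbf{Met_3}^{C}$: tripointed metric spaces with continuous maps preserving $T,L,R$. Let $M=\{a,b,c\}$. $M\times X$ has metric $\tfrac12d(x,y)$ within a copy and $1$ between copies; $M\otimes X$ is the quotient metric space by the equivalence relation generated by $(b,T)\sim(a,L)$, $(a,R)\sim(c,T)$, $(c,L)\sim(b,R)$, elements $m\otimes x$, distinguished points $a\otimes T,b\otimes L,c\otimes R$; $F=M\otimes-$, $(M\otimes f)(m\otimes x)=m\otimes f(x)$; $M^n\otimes-$ is the $n$-fold iterate. A coalgebra is $(X,e\colon X\to FX)$. With $I=\{T,L,R\}$ discrete and $!\colon I\to FI$ ($T\mapsto a\otimes T$, $L\mapsto b\otimes L$, $R\mapsto c\otimes R$), $G$ is the metric union of the chain of isometric embeddings $I\to FI\to F^2I\to\cdots$ (elements: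 expressions $m_0\otimes\cdots\otimes m_{n-1}\otimes z$ modulo induced identifications), and $g\colon M\otimes G\to G$, $g(m\otimes w)=m\otimes w$, is a bijective isometry. $S$ is the Cauchy completion of $G$ (distinguished points $T,L,R$). The completion of $g$ yields a bijective isometry $\psi\colon M\otimes S\to S$ and $s=\psi^{-1}\colon S\to M\otimes S$; explicitly, if $w_n=m\otimes w_n'\in G$ for all $n$ and $(w_n)$ converges in $S$, then $s(\lim_n w_n)=m\otimes\lim_n w_n'$. *)

(* Defs.v *)
From Stdlib Require Import Reals List ClassicalEpsilon.
From Coquelicot Require Import Coquelicot.
Import ListNotations.
Open Scope R_scope.

Inductive Mlet : Type := ma | mb | mc.

Definition Mlet_eqb (x y : Mlet) : bool :=
  match x, y with
  | ma, ma | mb, mb | mc, mc => true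
  | _, _ => false
  end.

(** ** Quotient pseudometric on M x C  (the object M (x) C).
    C carries a pseudometric [d] and three distinguished points T L R. *)
Section Tensor.
Context {C : Type} (d : C -> C -> R) (pT pL pR : C).

Definition prod_dist (p q : Mlet * C) : R :=
  if Mlet_eqb (fst p) (fst q) then d (snd p) (snd q) / 2 else 1.

Definition glued (p q : Mlet * C) : Prop :=
  (p = (mb, pT) /\ q = (ma, pL)) \/ (p = (ma, pR) /\ q = (mc, pT)) \/
  (p = (mc, pL) /\ q = (mb, pR)).

(* the equivalence relation they generate (already transitive) *)
Definition glue_rel (p q : Mlet * C) : Prop := p = q \/ glued p q \/ glued q p.

Fixpoint chain_ok (p q : Mlet * C) (l : list ((Mlet * C) * (Mlet * C))) : Prop :=
  match l with
  | [] => glue_rel p q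
  | xy :: l' => glue_rel p (fst xy) /\ chain_ok (snd xy) q l'
  end.

Definition chain_cost (l : list ((Mlet * C) * (Mlet * C))) : R :=
  fold_right (fun xy acc => prod_dist (fst xy) (snd xy) + acc) 0 l.

Definition qdist (p q : Mlet * C) : R :=
  real (Glb_Rbar (fun r => exists l, chain_ok p q l /\ r = chain_cost l)).

End Tensor.

(** ** Iterates F^n C = M (x) ... (x) M (x) C, represented on words:
    the element m_0 (x) ... (x) m_{n-1} (x) x is represented by ([m_0;...;m_{n-1}], x). *)
Fixpoint iter_dist {C : Type} (d : C -> C -> R) (pT pL pR : C) (n : nat)
  : list Mlet * C -> list Mlet * C -> R :=
  match n with
  | O => fun p q => d (snd p) (snd q)
  | S k => fun p q =>
      qdist (iter_dist d pT pL pR k)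
        (repeat ma k, pT) (repeat mb k, pL) (repeat mc k, pR)
        (hd ma (fst p), (tl (fst p), snd p))
        (hd ma (fst q), (tl (fst q), snd q))
  end.

Record TriMet : Type := {
  tcar :> Type;
  tdist : tcar -> tcar -> R;
  tT : tcar; tL : tcar; tR : tcar;
  tdist_ge0 : forall x y, 0 <= tdist x y;
  tdist_le1 : forall x y, tdist x y <= 1;
  tdist_eq0 : forall x y, tdist x y = 0 <-> x = y;
  tdist_sym : forall x y, tdist x y = tdist y x;
  tdist_tri : forall x y z, tdist x z <= tdist x y + tdist y z;
  tdist_TL : tdist tT tL = 1;
  tdist_LR : tdist tL tR = 1;
  tdist_TR : tdist tT tR = 1
}.

Definition tensor_dist (X : TriMet) : Mlet * X -> Mlet * X -> R :=
  qdist (tdist X) (tT X) (tL X) (tR X).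

(** coalgebra e : X -> M (x) X in Met_3^C: continuous, preserves T, L, R
    (equality in the quotient = quotient distance 0) *)
Definition is_coalgebra (X : TriMet) (e : X -> Mlet * X) : Prop :=
  (forall x eps, 0 < eps -> exists delta, 0 < delta /\
      forall y, tdist X x y < delta -> tensor_dist X (e x) (e y) < eps) /\
  tensor_dist X (e (tT X)) (ma, tT X) = 0 /\
  tensor_dist X (e (tL X)) (mb, tL X) = 0 /\
  tensor_dist X (e (tR X)) (mc, tR X) = 0.

Fixpoint chi {X : Type} (e : X -> Mlet * X) (x : X) (n : nat) : list Mlet * X :=
  match n with
  | O => ([], x)
  | S k => let p := chi e x k in (fst p ++ [fst (e (snd p))], snd (e (snd p)))
  end.

Definition word (m : nat -> Mlet) (n : nat) : list Mlet := map m (seq 0 n).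

Inductive Ipt : Type := iT | iL | iR.

Definition Ipt_eqb (x y : Ipt) : bool :=
  match x, y with
  | iT, iT | iL, iL | iR, iR => true
  | _, _ => false
  end.

Definition dI (x y : Ipt) : R := if Ipt_eqb x y then 0 else 1.

(* ! : I -> F I :  T |-> a(x)T, L |-> b(x)L, R |-> c(x)R *)
Definition bang_letter (z : Ipt) : Mlet :=
  match z with iT => ma | iL => mb | iR => mc end.

Definition G : Type := list Mlet * Ipt.

(* image of an element of F^k I in F^N I (N >= k) under the chain embeddings *)
Definition embed (N : nat) (p : G) : G :=
  (fst p ++ repeat (bang_letter (snd p)) (N - length (fst p)), snd p).

(* metric of G: distance computed in F^N I for N large enough *)
Definition dG (p q : G) : R :=
  let N := Nat.max (length (fst p)) (length (fst q)) in
  iter_dist dI iT iL iR N (embed N p) (embed N q).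

(** ** S: the Cauchy completion of G (Cauchy sequences, distance = limit;
    equality in S = distance 0) *)
Definition Sc : Type := nat -> G.

Definition cauchyG (u : Sc) : Prop :=
  forall eps, 0 < eps -> exists N, forall n m, (N <= n)%nat -> (N <= m)%nat ->
    dG (u n) (u m) < eps.

Definition dS (u v : Sc) : R := real (Lim_seq (fun n => dG (u n) (v n))).

Definition sT : Sc := fun _ => ([], iT).
Definition sL : Sc := fun _ => ([], iL).
Definition sR : Sc := fun _ => ([], iR).

Definition dMS : Mlet * Sc -> Mlet * Sc -> R := qdist dS sT sL sR.

(* psi : M (x) S -> S, the completion of g(m (x) w) = m (x) w *)
Definition psi (p : Mlet * Sc) : Sc :=
  fun n => (fst p :: fst (snd p n), snd (snd p n)).

(* s = psi^{-1} : S -> M (x) S *)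
Definition s_map (y : Sc) : Mlet * Sc :=
  epsilon (inhabits (ma, sT)) (fun p => cauchyG (snd p) /\ dS (psi p) y = 0).

Definition theta (z : Ipt) (m : nat -> Mlet) (n : nat) : G := (word m n, z).

Definition f_map {X : Type} (z : Ipt) (ch : X -> (nat -> Mlet) * (nat -> X)) (x : X) : Sc :=
  theta z (fst (ch x)).

(* Main.v *)
Require Import Defs.
From Stdlib Require Import Reals List Lra Lia ClassicalEpsilon.
From Coquelicot Require Import Coquelicot.
Import ListNotations.
Open Scope R_scope.

Definition lab {C : Type} (pT pL pR : C) (m : Mlet) : C :=
  match m with ma => pT | mb => pL | mc => pR end.

Definition third (m m' : Mlet) : Mlet :=
  match m, m' with
  | ma, mb | mb, ma => mc
  | ma, mc | mc, ma => mb
  | _, _ => ma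
  end.

Definition Ef {C : Type} (d : C -> C -> R) (pT pL pR : C) (m0 : Mlet) (b : C) (m : Mlet) (a : C) : R :=
  if Mlet_eqb m0 m then d b a / 2
  else Rmin 1 (Rmin ((d b (lab pT pL pR m) + d a (lab pT pL pR m0)) / 2)
                    ((d b (lab pT pL pR (third m0 m)) + 1 + d a (lab pT pL pR (third m0 m))) / 2)).

Record good {C : Type} (d : C -> C -> R) (pT pL pR : C) : Prop := {
  g_ge0 : forall x y, 0 <= d x y;
  g_le1 : forall x y, d x y <= 1;
  g_refl : forall x, d x x = 0;
  g_sym : forall x y, d x y = d y x;
  g_tri : forall x y z, d x z <= d x y + d y z;
  g_TL : d pT pL = 1; g_LR : d pL pR = 1; g_TR : d pT pR = 1 }.

Lemma Mlet_eqb_refl m : Mlet_eqb m m = true.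
Proof. destruct m; reflexivity. Qed.
Lemma Mlet_eqb_true m m' : Mlet_eqb m m' = true -> m = m'.
Proof. destruct m, m'; simpl; congruence. Qed.
Lemma Mlet_eqb_false m m' : m <> m' -> Mlet_eqb m m' = false.
Proof. destruct m, m'; simpl; congruence. Qed.
Lemma Mlet_eqb_sym m m' : Mlet_eqb m m' = Mlet_eqb m' m.
Proof. destruct m, m'; reflexivity. Qed.
Lemma third_sym m m' : third m m' = third m' m.
Proof. destruct m, m'; reflexivity. Qed.
Lemma third_neq1 m m' : m <> m' -> third m m' <> m.
Proof. destruct m, m'; simpl; congruence. Qed.
Lemma third_neq2 m m' : m <> m' -> third m m' <> m'.
Proof. destruct m, m'; simpl; congruence. Qed.

Lemma glue_lab {C : Type} (pT pL pR : C) m0 m : m0 <> m ->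
  glue_rel pT pL pR (m0, lab pT pL pR m) (m, lab pT pL pR m0).
Proof.
  intro H; unfold glue_rel, glued.
  destruct m0, m; simpl; try congruence; intuition.
Qed.

Lemma glb_eq (S : R -> Prop) c :
  (forall r, S r -> c <= r) -> (exists r, S r /\ r <= c) -> real (Glb_Rbar S) = c.
Proof.
  intros Hlb [r [Hr Hrc]].
  destruct (Glb_Rbar_correct S) as [H1 H2].
  assert (A : Rbar_le c (Glb_Rbar S)) by (apply H2; intros x Hx; simpl; apply Hlb; auto).
  assert (B : Rbar_le (Glb_Rbar S) r) by (apply H1; auto).
  destruct (Glb_Rbar S) as [g| |]; simpl in *; try contradiction; lra.
Qed.

Section Gen.
Context {C : Type} (d : C -> C -> R) (pT pL pR : C) (H : good d pT pL pR).
Notation lb := (lab pT pL pR).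
Notation E := (Ef d pT pL pR).
Let dge0 := g_ge0 d pT pL pR H.
Let dle1 := g_le1 d pT pL pR H.
Let drefl := g_refl d pT pL pR H.
Let dsym := g_sym d pT pL pR H.
Let dtri := g_tri d pT pL pR H.
Let dTL := g_TL d pT pL pR H.
Let dLR := g_LR d pT pL pR H.
Let dTR := g_TR d pT pL pR H.


Lemma lab_dist m m' : m <> m' -> d (lb m) (lb m') = 1.
Proof.
  intro Hm. destruct H.
  destruct m, m'; simpl; try congruence; try assumption; rewrite dsym; assumption.
Qed.

Lemma E_same m b a : E m b m a = d b a / 2.
Proof. unfold Ef; rewrite Mlet_eqb_refl; reflexivity. Qed.

Lemma E_bounds m0 b m a : 0 <= E m0 b m a <= 1.
Proof.
  unfold Ef. destruct (Mlet_eqb m0 m).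
  - pose proof (dge0 b a); pose proof (dle1 b a); lra.
  - pose proof (dge0 b (lb m)); pose proof (dge0 a (lb m0));
    pose proof (dge0 b (lb (third m0 m))); pose proof (dge0 a (lb (third m0 m))).
    unfold Rmin; repeat destruct Rle_dec; lra.
Qed.

Lemma E_le_X m0 b m a : m0 <> m -> E m0 b m a <= (d b (lb m) + d a (lb m0)) / 2.
Proof.
  intro Hm; unfold Ef; rewrite (Mlet_eqb_false _ _ Hm).
  unfold Rmin; repeat destruct Rle_dec; lra.
Qed.

Lemma E_ge_X m0 b m a : m0 <> m -> Rmin (1/2) ((d b (lb m) + d a (lb m0)) / 2) <= E m0 b m a.
Proof.
  intro Hm; unfold Ef; rewrite (Mlet_eqb_false _ _ Hm).
  pose proof (dge0 b (lb m)); pose proof (dge0 a (lb m0));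
    pose proof (dge0 b (lb (third m0 m))); pose proof (dge0 a (lb (third m0 m))).
  unfold Rmin; repeat destruct Rle_dec; lra.
Qed.

Lemma E_lip m0 b m a a' : E m0 b m a <= E m0 b m a' + d a a' / 2.
Proof.
  unfold Ef. destruct (Mlet_eqb m0 m).
  - pose proof (dtri b a' a) as h; rewrite (dsym a' a) in h; lra.
  - pose proof (dtri a a' (lb m0)); pose proof (dtri a a' (lb (third m0 m))).
    pose proof (dge0 a a'). unfold Rmin; repeat destruct Rle_dec; lra.
Qed.

Lemma E_glue m0 b x y : glue_rel pT pL pR x y -> E m0 b (fst x) (snd x) = E m0 b (fst y) (snd y).
Proof.

  assert (g1 : d pL pT = 1) by (rewrite dsym; auto).
  assert (g2 : d pR pL = 1) by (rewrite dsym; auto).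
  assert (g3 : d pR pT = 1) by (rewrite dsym; auto).
  pose proof (drefl pT); pose proof (drefl pL); pose proof (drefl pR).
  pose proof (dge0 b pT); pose proof (dge0 b pL); pose proof (dge0 b pR).
  pose proof (dle1 b pT); pose proof (dle1 b pL); pose proof (dle1 b pR).
  unfold glue_rel, glued.
  intros [-> | [ [[-> ->]|[[-> ->]|[-> ->]]] | [[-> ->]|[[-> ->]|[-> ->]]] ]]; [reflexivity| | | | | |];
  destruct m0; unfold Ef; simpl;
  repeat match goal with
  | h : d ?x ?y = _ |- context [d ?x ?y] => rewrite h
  end;
  unfold Rmin; repeat destruct Rle_dec; lra.
Qed.

Lemma chain_lemma m0 b : forall l x y, chain_ok pT pL pR x y l ->
  E m0 b (fst y) (snd y) <= E m0 b (fst x) (snd x) + chain_cost d l.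
Proof.
  induction l as [|[u v] l IH]; intros x y Hc; simpl in *.
  - rewrite (E_glue m0 b x y Hc); lra.
  - destruct Hc as [Hg Hc].
    specialize (IH _ _ Hc).
    rewrite (E_glue m0 b x u Hg).
    assert (E m0 b (fst v) (snd v) <= E m0 b (fst u) (snd u) + prod_dist d u v).
    { unfold prod_dist. destruct (Mlet_eqb (fst u) (fst v)) eqn:Heq.
      - apply Mlet_eqb_true in Heq. rewrite Heq. pose proof (E_lip m0 b (fst v) (snd v) (snd u)) as h; rewrite (dsym (snd v) (snd u)) in h; exact h.
      - pose proof (E_bounds m0 b (fst v) (snd v)); pose proof (E_bounds m0 b (fst u) (snd u)); lra. }
    lra.
Qed.

Lemma opt_chain m0 b m a : exists l, chain_ok pT pL pR (m0, b) (m, a) l /\ chain_cost d l <= E m0 b m a.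
Proof.
  destruct (Mlet_eqb m0 m) eqn:Heq.
  - apply Mlet_eqb_true in Heq; subst.
    exists [((m, b), (m, a))]. simpl. split.
    + unfold glue_rel; auto.
    + unfold prod_dist, Ef; simpl; rewrite Mlet_eqb_refl; lra.
  - assert (Hm : m0 <> m) by (intro; subst; rewrite Mlet_eqb_refl in Heq; discriminate).
    set (m2 := third m0 m).
    assert (c1 : exists l, chain_ok pT pL pR (m0, b) (m, a) l /\ chain_cost d l <= 1).
    { exists [((m0, b), (m, a))]. simpl. split. unfold glue_rel; auto.
      unfold prod_dist; simpl; rewrite Heq; lra. }
    assert (c2 : exists l, chain_ok pT pL pR (m0, b) (m, a) l /\
                   chain_cost d l <= (d b (lb m) + d a (lb m0)) / 2).
    { exists [((m0, b), (m0, lb m)); ((m, lb m0), (m, a))]. simpl. split.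
      - split. unfold glue_rel; auto. split. apply glue_lab; auto. unfold glue_rel; auto.
      - unfold prod_dist; simpl; rewrite !Mlet_eqb_refl. rewrite (g_sym _ _ _ _ H (lb m0) a). lra. }
    assert (c3 : exists l, chain_ok pT pL pR (m0, b) (m, a) l /\
                   chain_cost d l <= (d b (lb m2) + 1 + d a (lb m2)) / 2).
    { exists [((m0, b), (m0, lb m2)); ((m2, lb m0), (m2, lb m)); ((m, lb m2), (m, a))]. simpl. split.
      - split. unfold glue_rel; auto. split. apply glue_lab; apply not_eq_sym, third_neq1; auto.
        split. apply glue_lab. apply third_neq2; auto. unfold glue_rel; auto.
      - unfold prod_dist; simpl; rewrite !Mlet_eqb_refl.
        rewrite (g_sym _ _ _ _ H (lb m2) a). rewrite lab_dist by auto. lra. }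
    unfold Ef; rewrite Heq. fold m2.
    unfold Rmin; repeat destruct Rle_dec; auto.
Qed.

Lemma E_lb_all m0 b m a l : chain_ok pT pL pR (m0, b) (m, a) l -> E m0 b m a <= chain_cost d l.
Proof.
  intro Hc. pose proof (chain_lemma m0 b l _ _ Hc). simpl in H0.
  rewrite E_same, (g_refl _ _ _ _ H) in H0. lra.
Qed.

Lemma qdist_E m0 b m a : qdist d pT pL pR (m0, b) (m, a) = E m0 b m a.
Proof.
  unfold qdist. apply glb_eq.
  - intros r [l [Hl ->]]. apply E_lb_all; auto.
  - destruct (opt_chain m0 b m a) as [l [Hl Hle]]. exists (chain_cost d l); split; eauto.
Qed.

Lemma E_tri m0 b m a m' c : E m0 b m' c <= E m0 b m a + E m a m' c.
Proof.
  destruct (opt_chain m a m' c) as [l [Hl Hle]].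
  pose proof (chain_lemma m0 b l _ _ Hl). simpl in H0. lra.
Qed.

Lemma E_sym m0 b m a : E m0 b m a = E m a m0 b.
Proof.
  unfold Ef. rewrite Mlet_eqb_sym, third_sym. destruct (Mlet_eqb m m0).
  - rewrite (g_sym _ _ _ _ H); reflexivity.
  - f_equal. f_equal; f_equal; lra.
Qed.

Lemma E_diff_ge m0 b m : m0 <> m -> 1/2 <= E m0 b m (lb m).
Proof.
  intro Hm. pose proof (E_ge_X m0 b m (lb m) Hm).
  rewrite (lab_dist m m0) in H0 by auto. pose proof (dge0 b (lb m)).
  unfold Rmin in H0; destruct Rle_dec; lra.
Qed.

Lemma E_zero_diff m0 b m a : m0 <> m -> E m0 b m a = 0 -> d b (lb m) = 0 /\ d a (lb m0) = 0.
Proof.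
  intros Hm HE. pose proof (E_ge_X m0 b m a Hm). rewrite HE in H0.
  pose proof (dge0 b (lb m)); pose proof (dge0 a (lb m0)).
  unfold Rmin in H0; destruct Rle_dec; lra.
Qed.

End Gen.

Lemma Ef_congr {C1 C2 : Type} (d1 : C1 -> C1 -> R) c1T c1L c1R (d2 : C2 -> C2 -> R) c2T c2L c2R
  m0 b1 m a1 b2 a2 :
  d1 b1 a1 = d2 b2 a2 ->
  (forall k, d1 b1 (lab c1T c1L c1R k) = d2 b2 (lab c2T c2L c2R k)) ->
  (forall k, d1 a1 (lab c1T c1L c1R k) = d2 a2 (lab c2T c2L c2R k)) ->
  Ef d1 c1T c1L c1R m0 b1 m a1 = Ef d2 c2T c2L c2R m0 b2 m a2.
Proof. intros h1 h2 h3. unfold Ef. rewrite h1, !h2, !h3. reflexivity. Qed.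

Lemma lab_rep {C : Type} (pT pL pR : C) k m :
  lab (repeat ma k, pT) (repeat mb k, pL) (repeat mc k, pR) m = (repeat m k, lab pT pL pR m).
Proof. destruct m; reflexivity. Qed.


Ltac cornertac :=
  match goal with IHk : good ?D ?a ?b ?c |- _ =>
    simpl; unfold Ef; simpl;
    pose proof (g_TL _ _ _ _ IHk); pose proof (g_LR _ _ _ _ IHk); pose proof (g_TR _ _ _ _ IHk);
    pose proof (g_sym _ _ _ _ IHk a b); pose proof (g_sym _ _ _ _ IHk b c); pose proof (g_sym _ _ _ _ IHk a c);
    unfold Rmin; repeat destruct Rle_dec; lra
  end.

Section Iter.
Context {C : Type} (d : C -> C -> R) (pT pL pR : C) (H : good d pT pL pR).
Notation D := (iter_dist d pT pL pR).
Notation cT k := (repeat ma k, pT).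
Notation cL k := (repeat mb k, pL).
Notation cR k := (repeat mc k, pR).

Lemma good_iter : forall k, good (D k) (cT k) (cL k) (cR k).
Proof.
  induction k.
  - destruct H; constructor; simpl; auto.
  - assert (HE : forall p q, D (S k) p q = Ef (D k) (cT k) (cL k) (cR k)
              (hd ma (fst p)) (tl (fst p), snd p) (hd ma (fst q)) (tl (fst q), snd q)).
    { intros p q. simpl. apply qdist_E; auto. }
    constructor; intros; rewrite ?HE.
    + apply E_bounds; auto.
    + apply E_bounds; auto.
    + rewrite E_same by auto. rewrite (g_refl _ _ _ _ IHk). lra.
    + apply E_sym; auto.
    + apply E_tri; auto.
    + cornertac.
    + cornertac.
    + cornertac.
Qed.

Lemma iterE k p q : D (S k) p q = Ef (D k) (cT k) (cL k) (cR k)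
              (hd ma (fst p)) (tl (fst p), snd p) (hd ma (fst q)) (tl (fst q), snd q).
Proof. simpl. apply qdist_E. apply good_iter. Qed.

Lemma iter_same k m w1 y1 w2 y2 : D (S k) (m :: w1, y1) (m :: w2, y2) = D k (w1, y1) (w2, y2) / 2.
Proof. rewrite iterE. simpl. apply E_same. Qed.

Lemma iter_prefix : forall u k w1 y1 w2 y2,
  D (length u + k) (u ++ w1, y1) (u ++ w2, y2) = D k (w1, y1) (w2, y2) * (1/2) ^ (length u).
Proof.
  induction u; intros.
  - simpl. lra.
  - cbn [length app Nat.add pow]. rewrite iter_same, IHu. lra.
Qed.

End Iter.

Lemma Mlet_dec (m m' : Mlet) : {m = m'} + {m <> m'}.
Proof. decide equality. Qed.

Lemma good_dI : good dI iT iL iR.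
Proof.
  constructor; unfold dI.
  - intros [] []; simpl; lra.
  - intros [] []; simpl; lra.
  - intros []; simpl; lra.
  - intros [] []; simpl; lra.
  - intros [] [] []; simpl; lra.
  - simpl; lra.
  - simpl; lra.
  - simpl; lra.
Qed.

Lemma good_X (X : TriMet) : good (tdist X) (tT X) (tL X) (tR X).
Proof.
  constructor.
  - apply tdist_ge0.
  - apply tdist_le1.
  - intro x; apply tdist_eq0; reflexivity.
  - apply tdist_sym.
  - apply tdist_tri.
  - apply tdist_TL.
  - apply tdist_LR.
  - apply tdist_TR.
Qed.

Notation DI := (iter_dist dI iT iL iR).

Section XI.
Context (X : TriMet) (z : Ipt).
Notation DX := (iter_dist (tdist X) (tT X) (tL X) (tR X)).

Lemma Z1 : forall n w y m, DX n (w, y) (repeat m n, lab (tT X) (tL X) (tR X) m) = 0 ->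
  DI n (w, z) (repeat m n, lab iT iL iR m) <= (1/2) ^ n.
Proof.
  induction n; intros w y m H0.
  - simpl. apply (g_le1 _ _ _ _ good_dI).
  - rewrite (iterE _ _ _ _ (good_X X)) in H0. rewrite (iterE _ _ _ _ good_dI).
    cbn [fst snd hd tl repeat] in *.
    destruct (Mlet_dec (hd ma w) m) as [e|ne].
    + rewrite e in *. rewrite E_same in H0. rewrite E_same.
      assert (h : DX n (tl w, y) (repeat m n, lab (tT X) (tL X) (tR X) m) = 0) by lra.
      specialize (IHn _ _ _ h). cbn [pow]. lra.
    + exfalso. rewrite <- lab_rep in H0.
      pose proof (E_diff_ge _ _ _ _ (good_iter _ _ _ _ (good_X X) n) (hd ma w) (tl w, y) m ne).
      lra.
Qed.

Lemma Z2 : forall n w w' y y', DX n (w, y) (w', y') = 0 -> DI n (w, z) (w', z) <= 2 * (1/2) ^ n.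
Proof.
  induction n; intros w w' y y' H0.
  - simpl. rewrite (g_refl _ _ _ _ good_dI). lra.
  - rewrite (iterE _ _ _ _ (good_X X)) in H0. rewrite (iterE _ _ _ _ good_dI).
    cbn [fst snd] in *.
    destruct (Mlet_dec (hd ma w) (hd ma w')) as [e|ne].
    + rewrite e in *. rewrite E_same in H0. rewrite E_same.
      assert (h : DX n (tl w, y) (tl w', y') = 0) by lra.
      specialize (IHn _ _ _ _ h). cbn [pow]. lra.
    + destruct (E_zero_diff _ _ _ _ (good_iter _ _ _ _ (good_X X) n) _ _ _ _ ne H0) as [h1 h2].
      rewrite lab_rep in h1, h2.
      pose proof (Z1 _ _ _ _ h1). pose proof (Z1 _ _ _ _ h2).
      pose proof (E_le_X (DI n) (repeat ma n, iT) (repeat mb n, iL) (repeat mc n, iR) _ (tl w, z) _ (tl w', z) ne) as hX.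
      rewrite !lab_rep in hX. cbn [pow]. lra.
Qed.

End XI.

Lemma emb_pair N w t : embed N (w, t) = (fst (embed N (w, t)), t).
Proof. reflexivity. Qed.

Lemma emb_S N w t : (length w <= S N)%nat ->
  embed (S N) (w, t) = (hd (bang_letter t) w :: fst (embed N (tl w, t)), t).
Proof.
  intro h. unfold embed; cbn [fst snd]. destruct w; cbn [length hd tl app].
  - rewrite !Nat.sub_0_r. reflexivity.
  - reflexivity.
Qed.

Lemma corner_emb N m : embed N ([], lab iT iL iR m) = (repeat m N, lab iT iL iR m).
Proof. unfold embed; cbn [fst snd length app]. rewrite Nat.sub_0_r. destruct m; reflexivity. Qed.

Lemma length_tl {A} (w : list A) : length (tl w) = pred (length w).
Proof. destruct w; reflexivity. Qed.

Lemma EI : forall N p q, (length (fst p) <= N)%nat -> (length (fst q) <= N)%nat ->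
  DI (S N) (embed (S N) p) (embed (S N) q) = DI N (embed N p) (embed N q).
Proof.
  induction N; intros [w t] [w' t'] Hp Hq; cbn [fst] in Hp, Hq.
  - destruct w; [|simpl in Hp; lia]. destruct w'; [|simpl in Hq; lia].
    rewrite (iterE _ _ _ _ good_dI). 
    destruct t, t'; unfold Ef; cbn; unfold dI, Rmin; cbn; repeat destruct Rle_dec; lra.
  - rewrite (emb_S (S N) w t) by lia. rewrite (emb_S (S N) w' t') by lia.
    rewrite (emb_S N w t) by lia. rewrite (emb_S N w' t') by lia.
    rewrite !(iterE _ _ _ _ good_dI). cbn [fst snd hd tl].
    rewrite <- !emb_pair.
    assert (l1 : (length (tl w) <= N)%nat) by (rewrite length_tl; lia).
    assert (l2 : (length (tl w') <= N)%nat) by (rewrite length_tl; lia).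
    apply Ef_congr.
    + apply IHN; auto.
    + intro k. rewrite !lab_rep, <- !corner_emb. apply IHN; simpl; lia.
    + intro k. rewrite !lab_rep, <- !corner_emb. apply IHN; simpl; lia.
Qed.

Lemma DL_aux : forall j (p q : G),
  dG p q = DI (Nat.max (length (fst p)) (length (fst q)) + j)
              (embed (Nat.max (length (fst p)) (length (fst q)) + j) p)
              (embed (Nat.max (length (fst p)) (length (fst q)) + j) q).
Proof.
  induction j; intros p q.
  - unfold dG. rewrite Nat.add_0_r. reflexivity.
  - rewrite Nat.add_succ_r. rewrite EI; [apply IHj| lia | lia].
Qed.

Lemma DL N (p q : G) : (length (fst p) <= N)%nat -> (length (fst q) <= N)%nat ->
  dG p q = DI N (embed N p) (embed N q).
Proof.
  intros h1 h2.
  replace N with (Nat.max (length (fst p)) (length (fst q)) + (N - Nat.max (length (fst p)) (length (fst q))))%nat by lia.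
  apply DL_aux.
Qed.

Lemma goodI N : good (DI N) (repeat ma N, iT) (repeat mb N, iL) (repeat mc N, iR).
Proof. apply good_iter, good_dI. Qed.

Lemma dG_bounds p q : 0 <= dG p q <= 1.
Proof. unfold dG. split; [apply (g_ge0 _ _ _ _ (goodI _)) | apply (g_le1 _ _ _ _ (goodI _))]. Qed.

Lemma dG_sym p q : dG p q = dG q p.
Proof.
  set (N := Nat.max (length (fst p)) (length (fst q))).
  rewrite (DL N p q), (DL N q p) by lia. apply (g_sym _ _ _ _ (goodI _)).
Qed.

Lemma dG_tri p q r : dG p r <= dG p q + dG q r.
Proof.
  set (N := Nat.max (length (fst p)) (Nat.max (length (fst q)) (length (fst r)))).
  rewrite (DL N p r), (DL N p q), (DL N q r) by lia. apply (g_tri _ _ _ _ (goodI _)).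
Qed.

Lemma dG_psi m w t m' w' t' :
  dG (m :: w, t) (m' :: w', t') =
  Ef (DI (Nat.max (length w) (length w'))) (repeat ma (Nat.max (length w) (length w')), iT)
     (repeat mb (Nat.max (length w) (length w')), iL) (repeat mc (Nat.max (length w) (length w')), iR)
     m (embed (Nat.max (length w) (length w')) (w, t)) m' (embed (Nat.max (length w) (length w')) (w', t')).
Proof.
  set (N := Nat.max (length w) (length w')).
  rewrite (DL (S N)) by (simpl; lia).
  rewrite !emb_S by (simpl; lia).
  rewrite (iterE _ _ _ _ good_dI). cbn [fst snd hd tl].
  rewrite <- !emb_pair. reflexivity.
Qed.

Lemma dG_corner N w t k : (length w <= N)%nat ->
  DI N (embed N (w, t)) (lab (repeat ma N, iT) (repeat mb N, iL) (repeat mc N, iR) k)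
  = dG (w, t) ([], lab iT iL iR k).
Proof.
  intro h. rewrite lab_rep, <- corner_emb. rewrite (DL N); auto. simpl; lia.
Qed.

Lemma squeeze0 (a b : nat -> R) : (forall n, 0 <= a n <= b n) -> is_lim_seq b 0 -> is_lim_seq a 0.
Proof.
  intros h hb. apply (is_lim_seq_le_le_loc (fun _ => 0) a b).
  - exists 0%nat. intros n _. apply h.
  - apply is_lim_seq_const.
  - exact hb.
Qed.

Lemma lim_real0 (a : nat -> R) : is_lim_seq a 0 -> real (Lim_seq a) = 0.
Proof. intro h. rewrite (is_lim_seq_unique _ _ h). reflexivity. Qed.

Lemma lim_info (a : nat -> R) : (forall n, 0 <= a n <= 1) ->
  exists s i, LimSup_seq a = Finite s /\ LimInf_seq a = Finite i /\ 0 <= i <= s /\ s <= 1.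
Proof.
  intro h.
  assert (h1 : Rbar_le (LimSup_seq a) (LimSup_seq (fun _ => 1))).
  { apply LimSup_le. exists 0%nat. intros; apply h. }
  assert (h2 : Rbar_le (LimInf_seq (fun _ => 0)) (LimInf_seq a)).
  { apply LimInf_le. exists 0%nat. intros; apply h. }
  rewrite LimSup_seq_const in h1. rewrite LimInf_seq_const in h2.
  pose proof (LimSup_LimInf_seq_le a) as h3.
  destruct (LimSup_seq a) as [s| |]; destruct (LimInf_seq a) as [i| |]; simpl in *; try contradiction.
  exists s, i. repeat split; auto; lra.
Qed.

Lemma Lim_ge0 (a : nat -> R) : (forall n, 0 <= a n <= 1) -> 0 <= real (Lim_seq a).
Proof.
  intro h. destruct (lim_info a h) as [s [i [hs [hi hh]]]].
  unfold Lim_seq. rewrite hs, hi. simpl. lra.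
Qed.

Lemma lim_from_real0 (a : nat -> R) : (forall n, 0 <= a n <= 1) -> real (Lim_seq a) = 0 -> is_lim_seq a 0.
Proof.
  intros h h0. destruct (lim_info a h) as [s [i [hs [hi hh]]]].
  unfold Lim_seq in h0. rewrite hs, hi in h0. simpl in h0.
  assert (s = 0) by lra. assert (i = 0) by lra. subst.
  assert (ex : ex_lim_seq a) by (apply ex_lim_LimSup_LimInf_seq; rewrite hs, hi; reflexivity).
  pose proof (Lim_seq_correct a ex) as hc.
  unfold Lim_seq in hc. rewrite hs, hi in hc. simpl in hc.
  replace (Finite 0) with (Finite ((0 + 0) / 2)) by (f_equal; lra). exact hc.
Qed.

Lemma lim_geom2 (c : R) : is_lim_seq (fun n => c * (1/2) ^ n) 0.
Proof.
  replace (Finite 0) with (Rbar_mult c 0) by (simpl; f_equal; ring).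
  apply is_lim_seq_scal_l. apply is_lim_seq_geom. rewrite Rabs_right; lra.
Qed.

Lemma lim_scal0 (c : R) (a : nat -> R) : is_lim_seq a 0 -> is_lim_seq (fun n => c * a n) 0.
Proof.
  intro h. replace (Finite 0) with (Rbar_mult c 0) by (simpl; f_equal; ring).
  apply is_lim_seq_scal_l; auto.
Qed.

Lemma half_pow_pos n : 0 <= (1/2) ^ n.
Proof. apply pow_le; lra. Qed.

Lemma word_len M n : length (word M n) = n.
Proof. unfold word. rewrite length_map, length_seq. reflexivity. Qed.

Lemma word_S M n : word M (S n) = word M n ++ [M n].
Proof. unfold word. rewrite seq_S, map_app. reflexivity. Qed.

Lemma word_app M n m : (n <= m)%nat -> word M m = word M n ++ map M (seq n (m - n)).
Proof.
  intro h. unfold word. replace m with (n + (m - n))%nat at 1 by lia.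
  rewrite seq_app, map_app. reflexivity.
Qed.

Lemma chi_S {X : Type} (e : X -> Mlet * X) : forall n x,
  chi e x (S n) = (fst (e x) :: fst (chi e (snd (e x)) n), snd (chi e (snd (e x)) n)).
Proof.
  induction n; intro x.
  - reflexivity.
  - change (chi e x (S (S n))) with
      (let p := chi e x (S n) in (fst p ++ [fst (e (snd p))], snd (e (snd p)))).
    rewrite IHn. reflexivity.
Qed.

Lemma emb_full N w t : length w = N -> embed N (w, t) = (w, t).
Proof. intro h. unfold embed; cbn [fst snd]. rewrite h, Nat.sub_diag, app_nil_r. reflexivity. Qed.

Lemma emb_gen N w t : embed N (w, t) = (w ++ repeat (bang_letter t) (N - length w), t).
Proof. reflexivity. Qed.

Lemma dS_ge0 u v : 0 <= dS u v.
Proof. unfold dS. apply Lim_ge0. intro; apply dG_bounds. Qed.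

Lemma cost_ge0 l : 0 <= chain_cost dS l.
Proof.
  induction l as [|[p q] l IH]; simpl. lra.
  unfold prod_dist. destruct (Mlet_eqb _ _); pose proof (dS_ge0 (snd p) (snd q)); lra.
Qed.

Lemma dMS_zero p q : (exists l, chain_ok sT sL sR p q l /\ chain_cost dS l = 0) -> dMS p q = 0.
Proof.
  intros [l [hl hc]]. unfold dMS, qdist. apply glb_eq.
  - intros r [l' [_ ->]]. apply cost_ge0.
  - exists 0. split; [exists l; auto | lra].
Qed.

Lemma labS m n : lab sT sL sR m n = ([], lab iT iL iR m).
Proof. destruct m; reflexivity. Qed.

Theorem mainTheorem6 (X : TriMet) (e : X -> Mlet * X) (He : is_coalgebra X e)
  (z : Ipt) (ch : X -> (nat -> Mlet) * (nat -> X))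
  (Hch : forall (x : X) (n : nat),
     iter_dist (tdist X) (tT X) (tL X) (tR X) n
       (chi e x n) (word (fst (ch x)) n, snd (ch x) n) = 0) :
  forall x : X,
    dMS (s_map (f_map z ch x)) (fst (e x), f_map z ch (snd (e x))) = 0.
Proof.
  intro x.
  pose proof (good_iter _ _ _ _ (good_X X)) as gX.
  set (M := fst (ch x)). set (e1 := fst (e x)). set (x' := snd (e x)).
  set (M' := fst (ch x')).
  set (v := f_map z ch x').
  assert (Hv : forall n, v n = (word M' n, z)) by reflexivity.
  assert (Hfx : forall n, f_map z ch x n = (word M n, z)) by reflexivity.
  assert (HX : forall n, iter_dist (tdist X) (tT X) (tL X) (tR X) (S n)
                 (word M (S n), snd (ch x) (S n)) (e1 :: word M' n, snd (ch x') n) = 0).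
  { intro n. pose proof (Hch x (S n)) as h1. pose proof (Hch x' n) as h2.
    rewrite chi_S in h1. fold e1 x' M M' in h1, h2.
    destruct (chi e x' n) as [cw cy]. cbn [fst snd] in h1, h2.
    assert (h3 : iter_dist (tdist X) (tT X) (tL X) (tR X) (S n) (e1 :: cw, cy) (e1 :: word M' n, snd (ch x') n) = 0).
    { rewrite (iter_same _ _ _ _ (good_X X)). rewrite h2. lra. }
    pose proof (g_tri _ _ _ _ (gX (S n)) (word M (S n), snd (ch x) (S n)) (e1 :: cw, cy) (e1 :: word M' n, snd (ch x') n)).
    rewrite (g_sym _ _ _ _ (gX (S n)) (word M (S n), _) (e1 :: cw, cy)), h1, h3 in H.
    pose proof (g_ge0 _ _ _ _ (gX (S n)) (word M (S n), snd (ch x) (S n)) (e1 :: word M' n, snd (ch x') n)).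
    lra. }
  assert (HI : forall n, iter_dist dI iT iL iR (S n) (word M (S n), z) (e1 :: word M' n, z) <= 2 * (1/2) ^ (S n)).
  { intro n. exact (Z2 X z _ _ _ _ _ (HX n)). }
  assert (Hb : forall n, dG (e1 :: word M' n, z) (word M n, z) <= 2 * (1/2) ^ n).
  { intro n. rewrite (DL (S n)) by (simpl; rewrite word_len; lia).
    rewrite emb_full by (simpl; rewrite word_len; reflexivity).
    rewrite emb_gen. cbn [fst]. rewrite word_len. replace (S n - n)%nat with 1%nat by lia.
    assert (hp : iter_dist dI iT iL iR (length (word M n) + 1) (word M n ++ [M n], z) (word M n ++ repeat (bang_letter z) 1, z) <= (1/2) ^ n).
    { rewrite iter_prefix by apply good_dI. rewrite word_len.
      pose proof (g_le1 _ _ _ _ (goodI 1) ([M n], z) (repeat (bang_letter z) 1, z)).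
      pose proof (half_pow_pos n). nra. }
    rewrite word_len in hp. replace (n + 1)%nat with (S n) in hp by lia.
    rewrite <- word_S in hp.
    pose proof (g_tri _ _ _ _ (goodI (S n)) (e1 :: word M' n, z) (word M (S n), z) (word M n ++ repeat (bang_letter z) 1, z)).
    rewrite (g_sym _ _ _ _ (goodI (S n)) (e1 :: word M' n, z) (word M (S n), z)) in H.
    pose proof (HI n). cbn [pow] in H0. lra. }
  assert (Hvv : forall n m, (n <= m)%nat -> dG (v n) (v m) <= (1/2) ^ n).
  { intros n m h. rewrite !Hv. rewrite (DL m) by (simpl; rewrite word_len; lia).
    rewrite (emb_full m (word M' m)) by apply word_len.
    rewrite emb_gen. cbn [fst]. rewrite word_len.
    rewrite (word_app M' n m h).
    assert (hp : iter_dist dI iT iL iR (length (word M' n) + (m - n)) (word M' n ++ repeat (bang_letter z) (m - n), z) (word M' n ++ map M' (seq n (m - n)), z) <= (1/2) ^ n).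
    { rewrite iter_prefix by apply good_dI. rewrite word_len.
      pose proof (g_le1 _ _ _ _ (goodI (m - n)) (repeat (bang_letter z) (m - n), z) (map M' (seq n (m - n)), z)).
      pose proof (g_ge0 _ _ _ _ (goodI (m - n)) (repeat (bang_letter z) (m - n), z) (map M' (seq n (m - n)), z)).
      pose proof (half_pow_pos n). nra. }
    rewrite word_len in hp. replace (n + (m - n))%nat with m in hp by lia. exact hp. }
  assert (Hcv : cauchyG v).
  { intros eps Heps.
    destruct (pow_lt_1_zero (1/2) ltac:(rewrite Rabs_right; lra) eps Heps) as [N HN].
    exists N. intros n m hn hm.
    destruct (Nat.le_gt_cases n m) as [h|h].
    - pose proof (Hvv n m h). pose proof (HN n hn). pose proof (Rle_abs ((1/2)^n)). lra.
    - rewrite dG_sym. pose proof (Hvv m n ltac:(lia)). pose proof (HN m hm).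
      pose proof (Rle_abs ((1/2)^m)). lra. }
  assert (Hpsiq : forall n, psi (e1, v) n = (e1 :: word M' n, z)) by reflexivity.
  assert (Hblim : is_lim_seq (fun n => dG (psi (e1, v) n) (f_map z ch x n)) 0).
  { apply (squeeze0 _ (fun n => 2 * (1/2) ^ n)); [|apply lim_geom2].
    intro n. rewrite Hpsiq, Hfx. split; [apply dG_bounds| apply Hb]. }
  assert (Hex : exists p : Mlet * Sc, cauchyG (snd p) /\ dS (psi p) (f_map z ch x) = 0).
  { exists (e1, v). split; [exact Hcv|]. unfold dS. apply lim_real0. exact Hblim. }
  pose proof (@epsilon_spec _ (inhabits (ma, sT))
     (fun p => cauchyG (snd p) /\ dS (psi p) (f_map z ch x) = 0) Hex) as [Hc Hd].
  unfold s_map. fold e1 x'. fold v.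
  revert Hc Hd.
  generalize (epsilon (inhabits (ma, sT)) (fun p => cauchyG (snd p) /\ dS (psi p) (f_map z ch x) = 0)).
  intros [m u] Hc Hd. cbn [snd] in Hc.
  assert (Ha : is_lim_seq (fun n => dG (psi (m, u) n) (f_map z ch x n)) 0).
  { apply lim_from_real0; [intro; apply dG_bounds | exact Hd]. }
  assert (Hclim : is_lim_seq (fun n => dG (psi (m, u) n) (psi (e1, v) n)) 0).
  { apply (squeeze0 _ (fun n => dG (psi (m, u) n) (f_map z ch x n) + dG (psi (e1, v) n) (f_map z ch x n))).
    - intro n. split; [apply dG_bounds|].
      rewrite (dG_sym (psi (e1, v) n)). apply dG_tri.
    - replace (Finite 0) with (Finite (0 + 0)) by (f_equal; lra).
      apply is_lim_seq_plus'; auto. }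
  assert (Hpsi : forall n, dG (psi (m, u) n) (psi (e1, v) n) =
     Ef (iter_dist dI iT iL iR (Nat.max (length (fst (u n))) (length (word M' n))))
        (repeat ma (Nat.max (length (fst (u n))) (length (word M' n))), iT)
        (repeat mb (Nat.max (length (fst (u n))) (length (word M' n))), iL)
        (repeat mc (Nat.max (length (fst (u n))) (length (word M' n))), iR)
        m (embed (Nat.max (length (fst (u n))) (length (word M' n))) (u n))
        e1 (embed (Nat.max (length (fst (u n))) (length (word M' n))) (word M' n, z))).
  { intro n. rewrite Hpsiq. change (psi (m, u) n) with (m :: fst (u n), snd (u n)).
    rewrite dG_psi. rewrite <- surjective_pairing. reflexivity. }
  apply dMS_zero.
  destruct (Mlet_dec m e1) as [E|NE].
  - subst m.
    assert (Huv : is_lim_seq (fun n => dG (u n) (v n)) 0).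
    { apply (is_lim_seq_ext (fun n => 2 * dG (psi (e1, u) n) (psi (e1, v) n))).
      - intro n. rewrite Hpsi, E_same. rewrite Hv, <- DL; [lra| lia | simpl; lia].
      - apply lim_scal0; auto. }
    exists [((e1, u), (e1, v))]. simpl. split.
    + split; unfold glue_rel; auto.
    + unfold prod_dist; simpl. rewrite Mlet_eqb_refl. unfold dS. rewrite lim_real0 by auto. lra.
  - assert (Hbd : forall n, dG (u n) ([], lab iT iL iR e1) + dG (v n) ([], lab iT iL iR m)
                           <= 4 * dG (psi (m, u) n) (psi (e1, v) n)).
    { intro n. rewrite Hpsi. rewrite Hv.
      destruct (u n) as [w t]. cbn [fst].
      set (N := Nat.max (length w) (length (word M' n))).
      pose proof (E_ge_X _ _ _ _ (goodI N) m (embed N (w, t)) e1 (embed N (word M' n, z)) NE) as h.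
      rewrite !dG_corner in h by (unfold N; lia).
      pose proof (dG_bounds (w, t) ([], lab iT iL iR e1)). pose proof (dG_bounds (word M' n, z) ([], lab iT iL iR m)).
      unfold Rmin in h. destruct Rle_dec; lra. }
    assert (HA : is_lim_seq (fun n => dG (u n) ([], lab iT iL iR e1)) 0).
    { apply (squeeze0 _ (fun n => 4 * dG (psi (m, u) n) (psi (e1, v) n))); [|apply lim_scal0; auto].
      intro n. pose proof (Hbd n). pose proof (dG_bounds (u n) ([], lab iT iL iR e1)).
      pose proof (dG_bounds (v n) ([], lab iT iL iR m)). lra. }
    assert (HB : is_lim_seq (fun n => dG ([], lab iT iL iR m) (v n)) 0).
    { apply (squeeze0 _ (fun n => 4 * dG (psi (m, u) n) (psi (e1, v) n))); [|apply lim_scal0; auto].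
      intro n. pose proof (Hbd n). pose proof (dG_bounds (u n) ([], lab iT iL iR e1)).
      pose proof (dG_bounds (v n) ([], lab iT iL iR m)). rewrite dG_sym. lra. }
    exists [((m, u), (m, lab sT sL sR e1)); ((e1, lab sT sL sR m), (e1, v))]. simpl. split.
    + split. unfold glue_rel; auto. split. apply glue_lab; auto. unfold glue_rel; auto.
    + unfold prod_dist; simpl. rewrite !Mlet_eqb_refl. unfold dS.
      rewrite !lim_real0; [lra| |].
      * first [ apply (is_lim_seq_ext (fun n => dG ([], lab iT iL iR m) (v n))); [intro n; rewrite labS; reflexivity | exact HB]
              | apply (is_lim_seq_ext (fun n => dG (u n) ([], lab iT iL iR e1))); [intro n; rewrite labS; reflexivity | exact HA] ].
      * first [ apply (is_lim_seq_ext (fun n => dG ([], lab iT iL iR m) (v n))); [intro n; rewrite labS; reflexivity | exact HB]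
              | apply (is_lim_seq_ext (fun n => dG (u n) ([], lab iT iL iR e1))); [intro n; rewrite labS; reflexivity | exact HA] ].
Qed.
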